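(* Let $(\Sigma_+,\Sigma_-,N_1,N_2,N_3)$ be a solution of the Wainwright–Hsu system satisfying the constraint, with $N_1<0$ and $N_2,N_3>0$. Then for every $\epsilon>0$ there is $T$ such that $\Sigma_+(\tau)\leq\frac12+\epsilon$ for all $\tau\geq T$.
   Context: Wainwright–Hsu system: for functions $N_1,N_2,N_3,\Sigma_+,\Sigma_-$ of $\tau\in\mathbb{R}$ (prime denotes $d/d\tau$), $N_1'=(q-4\Sigma_+)N_1$, $N_2'=(q+2\Sigma_++2\sqrt3\Sigma_-)N_2$, $N_3'=(q+2\Sigma_+-2\sqrt3\Sigma_-)N_3$, $\Sigma_+'=-(2-q)\Sigma_+-3S_+$, $\Sigma_-'=-(2-q)\Sigma_--3S_-$, where $q=2(\Sigma_+^2+\Sigma_-^2)$, $S_+=\frac12[(N_2-N_3)^2-N_1(2N_1-N_2-N_3)]$, $S_-=\frac{\sqrt3}{2}(N_3-N_2)(N_1-N_2-N_3)$, together with the constraint $\Sigma_+^2+\Sigma_-^2+\frac34[N_1^2+N_2^2+N_3^2-2(N_1N_2+N_2N_3+N_1N_3)]=1$. Solutions with these sign conditions exist for all $\tau\in\mathbb{R}$. *)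

(* Defs.v *)
From Stdlib Require Import Reals.
From Coquelicot Require Import Coquelicot.
Open Scope R_scope.

Definition qWH (Sp Sm : R) : R := 2 * (Sp ^ 2 + Sm ^ 2).

Definition SplusWH (N1 N2 N3 : R) : R :=
  / 2 * ((N2 - N3) ^ 2 - N1 * (2 * N1 - N2 - N3)).

Definition SminusWH (N1 N2 N3 : R) : R :=
  sqrt 3 / 2 * (N3 - N2) * (N1 - N2 - N3).

Definition WH_solution (N1 N2 N3 Sp Sm : R -> R) : Prop :=
  forall t : R,
    is_derive N1 t ((qWH (Sp t) (Sm t) - 4 * Sp t) * N1 t) /\
    is_derive N2 t ((qWH (Sp t) (Sm t) + 2 * Sp t + 2 * sqrt 3 * Sm t) * N2 t) /\
    is_derive N3 t ((qWH (Sp t) (Sm t) + 2 * Sp t - 2 * sqrt 3 * Sm t) * N3 t) /\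
    is_derive Sp t (- (2 - qWH (Sp t) (Sm t)) * Sp t - 3 * SplusWH (N1 t) (N2 t) (N3 t)) /\
    is_derive Sm t (- (2 - qWH (Sp t) (Sm t)) * Sm t - 3 * SminusWH (N1 t) (N2 t) (N3 t)) /\
    Sp t ^ 2 + Sm t ^ 2
      + 3 / 4 * (N1 t ^ 2 + N2 t ^ 2 + N3 t ^ 2
                 - 2 * (N1 t * N2 t + N2 t * N3 t + N1 t * N3 t)) = 1.

(* Main.v *)
Require Import Defs.
From Stdlib Require Import Reals Lra Psatz Classical.
From Coquelicot Require Import Coquelicot.
Open Scope R_scope.

Lemma d_eq (f : R -> R) x a b : is_derive f x a -> a = b -> is_derive f x b.
Proof. intros H ->; exact H. Qed.

Lemma d_mult (f g : R -> R) x a b : is_derive f x a -> is_derive g x b ->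
  is_derive (fun t => f t * g t) x (a * g x + f x * b).
Proof. intros Hf Hg. exact (is_derive_mult f g x a b Hf Hg (fun n m => Rmult_comm n m)). Qed.

Lemma d_plus (f g : R -> R) x a b : is_derive f x a -> is_derive g x b ->
  is_derive (fun t => f t + g t) x (a + b).
Proof. intros Hf Hg. exact (is_derive_plus f g x a b Hf Hg). Qed.

Lemma d_opp (f : R -> R) x a : is_derive f x a -> is_derive (fun t => - f t) x (- a).
Proof. intros Hf. exact (is_derive_opp f x a Hf). Qed.

Lemma d_id x : is_derive (fun t => t) x 1.
Proof. apply (is_derive_id x). Qed.

Lemma d_const (k : R) x : is_derive (fun _ => k) x 0.
Proof. apply (is_derive_const k x). Qed.

Lemma d_explin k x : is_derive (fun t => exp (k * t)) x (k * exp (k * x)).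
Proof.
  assert (H1 : is_derive (fun t => k * t) x (k * 1)) by (apply is_derive_scal; apply d_id).
  assert (H2 := is_derive_comp exp (fun t => k * t) x _ _ (is_derive_exp (k*x)) H1).
  simpl in H2. eapply d_eq. exact H2. rewrite Rmult_1_r. reflexivity.
Qed.

Lemma d_cont (f : R -> R) x a : is_derive f x a -> continuity_pt f x.
Proof. intro H. apply derivable_continuous_pt. exists a. apply is_derive_Reals; exact H. Qed.

Lemma mono (f df : R -> R) a b : (forall t, is_derive f t (df t)) -> a <= b ->
  (forall t, a <= t <= b -> 0 <= df t) -> f a <= f b.
Proof.
  intros Hd Hab Hp.
  destruct (MVT_gen f a b df) as (c & Hc & Heq).
  - intros; apply Hd.
  - intros; eapply d_cont; apply Hd.
  - rewrite Rmin_left in Hc by lra. rewrite Rmax_right in Hc by lra.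
    assert (0 <= df c * (b - a)) by (apply Rmult_le_pos; [apply Hp; lra|lra]). lra.
Qed.

Lemma growth (f df : R -> R) k a b : (forall t, is_derive f t (df t)) -> a <= b ->
  (forall t, a <= t <= b -> k * f t <= df t) -> f a * exp (k * (b - a)) <= f b.
Proof.
  intros Hd Hab Hp.
  assert (H := mono (fun t => f t * exp (-k * t))
     (fun t => df t * exp (-k*t) + f t * (-k * exp (-k*t))) a b).
  assert (H1 : f a * exp (- k * a) <= f b * exp (- k * b)).
  { apply H; auto.
    - intro t. apply (d_mult f (fun t => exp (-k*t))). apply Hd. apply (d_explin (-k)).
    - intros t Ht. specialize (Hp t Ht). assert (0 < exp (-k*t)) by apply exp_pos. nra. }
  assert (E1 : exp (k*(b-a)) = exp (-k*a) * exp (k*b)).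
  { rewrite <- exp_plus. f_equal. ring. }
  assert (E2 : exp (-k*b) * exp (k*b) = 1).
  { rewrite <- exp_plus. replace (-k*b + k*b) with 0 by ring. apply exp_0. }
  assert (0 < exp (k*b)) by apply exp_pos.
  rewrite E1.
  replace (f b) with (f b * exp (-k*b) * exp (k*b)) by (rewrite Rmult_assoc, E2; ring).
  replace (f a * (exp (- k * a) * exp (k * b))) with (f a * exp (- k * a) * exp (k * b)) by ring.
  apply Rmult_le_compat_r; lra.
Qed.

Lemma invariance (g dg : R -> R) c t0 : (forall t, is_derive g t (dg t)) ->
  (forall t, t0 <= t -> c < g t -> dg t <= 0) -> g t0 <= c ->
  forall t1, t0 <= t1 -> g t1 <= c.
Proof.
  intros Hd Hneg H0 t1 Ht1.
  apply Rnot_lt_le; intro Hc.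
  set (E := fun s => t0 <= s <= t1 /\ g s <= c).
  destruct (completeness E) as [s [Hub Hlub]].
  { exists t1. intros s [Hs _]. lra. }
  { exists t0. split; [lra|auto]. }
  assert (Hs0 : t0 <= s) by (apply Hub; split; [lra|auto]).
  assert (Hs1 : s <= t1) by (apply Hlub; intros x [Hx _]; lra).
  assert (Hgs : g s <= c).
  { apply Rnot_lt_le; intro Hgt.
    assert (Hct := d_cont g s _ (Hd s)).
    destruct (Hct (g s - c)) as [al [Hal Hx]]; [lra|].
    assert (Hup : is_upper_bound E (s - al/2)).
    { intros x [Hx1 Hx2]. apply Rnot_lt_le; intro Hlt.
      assert (x <= s) by (apply Hub; split; auto).
      destruct (Req_dec x s) as [->|Hne]; [lra|].
      assert (Hd' : dist R_met (g x) (g s) < g s - c).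
      { apply Hx. split. split; [exact I|auto].
        simpl. unfold R_dist. rewrite Rabs_left1; lra. }
      simpl in Hd'. unfold R_dist in Hd'. rewrite Rabs_left1 in Hd'; lra. }
    specialize (Hlub _ Hup). lra. }
  assert (Hlt : s < t1) by (destruct (Req_dec s t1); subst; lra).
  destruct (MVT_cor2 g dg s t1 Hlt) as (x & Heq & Hx).
  { intros; apply is_derive_Reals; apply Hd. }
  assert (c < g x).
  { apply Rnot_le_lt; intro Hle. assert (x <= s) by (apply Hub; split; [lra|auto]). lra. }
  assert (dg x <= 0) by (apply Hneg; lra).
  assert (dg x * (t1 - s) <= 0) by (apply Rmult_le_0_r; lra). lra.
Qed.

Definition Cns x1 n2 n3 sp sm := sp ^ 2 + sm ^ 2
      + 3 / 4 * (x1 ^ 2 + n2 ^ 2 + n3 ^ 2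
                 - 2 * (x1 * n2 + n2 * n3 + x1 * n3)).

Lemma alg_E x1 n2 n3 sp sm : Cns x1 n2 n3 sp sm = 1 ->
  - (2 - qWH sp sm) * sp - 3 * SplusWH x1 n2 n3 =
  -(3/2)*(x1^2 + (n2-n3)^2 - 2*x1*(n2+n3))*(1+sp) + 9/2*(x1^2 - x1*(n2+n3)).
Proof.
  intro H.
  assert (E : - (2 - qWH sp sm) * sp - 3 * SplusWH x1 n2 n3 =
   -(3/2)*(x1^2 + (n2-n3)^2 - 2*x1*(n2+n3))*(1+sp) + 9/2*(x1^2 - x1*(n2+n3))
   + 2*sp*(Cns x1 n2 n3 sp sm - 1)) by (unfold qWH, SplusWH, Cns; simpl; field).
  rewrite E, H. ring.
Qed.

Section A.
Variables x1 n2 n3 sp sm : R.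
Hypothesis H1 : x1 < 0.
Hypothesis H2 : 0 < n2.
Hypothesis H3 : 0 < n3.
Hypothesis HC : Cns x1 n2 n3 sp sm = 1.

Lemma Cns_eq : sp^2 + sm^2 + 3/4*(x1^2 + (n2-n3)^2 - 2*x1*(n2+n3)) = 1.
Proof. rewrite <- HC. unfold Cns. ring. Qed.

Lemma K_nonneg : 0 <= x1^2 + (n2-n3)^2 - 2*x1*(n2+n3).
Proof. assert (0 <= -x1*(n2+n3)) by (apply Rmult_le_pos; lra).
  assert (0 <= x1^2) by apply pow2_ge_0. assert (0 <= (n2-n3)^2) by apply pow2_ge_0. lra. Qed.

Lemma sig_le1 : sp^2 + sm^2 <= 1.
Proof. assert (H := K_nonneg). assert (H' := Cns_eq). nra. Qed.

Lemma AS_le : 0 <= - x1 * (n2+n3) <= 2/3.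
Proof. assert (H' := Cns_eq). assert (0 <= -x1*(n2+n3)) by (apply Rmult_le_pos; lra).
  assert (0 <= x1^2) by apply pow2_ge_0. assert (0 <= (n2-n3)^2) by apply pow2_ge_0.
  assert (0 <= sp^2) by apply pow2_ge_0. assert (0 <= sm^2) by apply pow2_ge_0. split; lra. Qed.

Lemma A2_le : x1^2 <= 4/3.
Proof. assert (H' := Cns_eq). assert (0 <= -x1*(n2+n3)) by (apply Rmult_le_pos; lra).
  assert (0 <= x1^2) by apply pow2_ge_0. assert (0 <= (n2-n3)^2) by apply pow2_ge_0.
  assert (0 <= sp^2) by apply pow2_ge_0. assert (0 <= sm^2) by apply pow2_ge_0. lra. Qed.

Lemma E_le9 : - (2 - qWH sp sm) * sp - 3 * SplusWH x1 n2 n3 <= 9.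
Proof.
  rewrite (alg_E _ _ _ _ sm HC).
  assert (H := K_nonneg). assert (H' := sig_le1). assert (Ha := AS_le). assert (Hb := A2_le).
  assert (-1 <= sp) by nra.
  assert (0 <= (x1^2 + (n2-n3)^2 - 2*x1*(n2+n3))*(1+sp)) by nra.
  nra.
Qed.

Lemma E_le3 : / 2 <= sp -> - (2 - qWH sp sm) * sp - 3 * SplusWH x1 n2 n3 <= 3 * x1^2.
Proof.
  intro Hs.
  rewrite (alg_E _ _ _ _ sm HC).
  assert (Ha := AS_le). assert (H' := sig_le1).
  assert (-1 <= sp) by nra.
  assert (0 <= ((n2-n3)^2)*(1+sp)) by (apply Rmult_le_pos; [apply pow2_ge_0|lra]).
  assert (0 <= (- x1 * (n2+n3))*(sp - /2)) by (apply Rmult_le_pos; lra).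
  assert (0 <= x1^2*sp) by (apply Rmult_le_pos; [apply pow2_ge_0|lra]).
  nra.
Qed.

Lemma P_le : x1 * x1 * n2 * n3 <= / 9.
Proof.
  assert (Ha := AS_le).
  assert (x1*x1*n2*n3 <= (x1*(n2+n3))^2 / 4).
  { assert (0 <= x1*x1*(n2-n3)^2) by (apply Rmult_le_pos; [nra|apply pow2_ge_0]).
    assert (E : (x1*(n2+n3))^2 / 4 - x1*x1*n2*n3 = x1*x1*(n2-n3)^2/4) by field. lra. }
  assert (E2 : (x1*(n2+n3))^2 = (-x1*(n2+n3))*(-x1*(n2+n3))) by ring.
  assert ((-x1*(n2+n3))*(-x1*(n2+n3)) <= 2/3*(2/3)) by (apply Rmult_le_compat; lra).
  lra.
Qed.
End A.


Theorem mainTheorem14 (N1 N2 N3 Sp Sm : R -> R) :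
  WH_solution N1 N2 N3 Sp Sm ->
  (forall t, N1 t < 0) -> (forall t, 0 < N2 t) -> (forall t, 0 < N3 t) ->
  forall eps : R, 0 < eps ->
  exists T : R, forall tau : R, T <= tau -> Sp tau <= / 2 + eps.
Proof.
  intros H HN1 HN2 HN3 eps Heps.
  destruct (classic (exists T : R, forall tau : R, T <= tau -> Sp tau <= / 2 + eps)) as [Hy|Hn];
    [exact Hy| exfalso].
  assert (Hvis : forall T, exists tau, T <= tau /\ / 2 + eps < Sp tau).
  { intro T. apply NNPP. intro C. apply Hn. exists T. intros tau Ht.
    apply Rnot_lt_le. intro Hl. apply C. exists tau. split; auto. }
  set (q := fun t => qWH (Sp t) (Sm t)).
  set (E := fun t => - (2 - qWH (Sp t) (Sm t)) * Sp t - 3 * SplusWH (N1 t) (N2 t) (N3 t)).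
  assert (HC : forall t, Cns (N1 t) (N2 t) (N3 t) (Sp t) (Sm t) = 1).
  { intro t. destruct (H t) as (_&_&_&_&_&Hc). exact Hc. }
  assert (Hq2 : forall t, q t <= 2).
  { intro t. assert (Hs := sig_le1 _ _ _ _ _ (HN1 t) (HN2 t) (HN3 t) (HC t)).
    unfold q, qWH. lra. }
  assert (Hqs : forall t, 2 * Sp t ^ 2 <= q t).
  { intro t. unfold q, qWH. assert (0 <= Sm t ^ 2) by apply pow2_ge_0. lra. }
  assert (dSp : forall t, is_derive Sp t (E t)).
  { intro t. destruct (H t) as (_&_&_&d&_). exact d. }
  set (V := fun t => - (N1 t * N2 t * N3 t)).
  assert (HVpos : forall t, 0 < V t).
  { intro t. unfold V. specialize (HN1 t). specialize (HN2 t). specialize (HN3 t).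
    assert (0 < (- N1 t) * N2 t * N3 t) by (apply Rmult_lt_0_compat; [apply Rmult_lt_0_compat|]; lra).
    lra. }
  assert (dV : forall t, is_derive V t (3 * q t * V t)).
  { intro t. destruct (H t) as (d1&d2&d3&_).
    eapply d_eq. apply (d_opp (fun t => N1 t * N2 t * N3 t)).
    apply (d_mult (fun t => N1 t * N2 t) N3). apply d_mult. exact d1. exact d2. exact d3.
    unfold V, q. match goal with |- ?a = ?b => change (@eq R a b) end. ring. }
  set (P := fun t => N1 t * N1 t * N2 t * N3 t).
  assert (HPpos : forall t, 0 < P t).
  { intro t. unfold P. specialize (HN1 t). specialize (HN2 t). specialize (HN3 t).
    assert (0 < (- N1 t) * (- N1 t) * N2 t * N3 t) by
      (repeat apply Rmult_lt_0_compat; lra).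
    replace (N1 t * N1 t * N2 t * N3 t) with ((- N1 t) * (- N1 t) * N2 t * N3 t) by ring. lra. }
  assert (dP : forall t, is_derive P t ((4 * q t - 4 * Sp t) * P t)).
  { intro t. destruct (H t) as (d1&d2&d3&_).
    eapply d_eq. apply (d_mult (fun t => N1 t * N1 t * N2 t) N3).
    apply (d_mult (fun t => N1 t * N1 t) N2). apply d_mult. exact d1. exact d1. exact d2. exact d3.
    unfold P, q. match goal with |- ?a = ?b => change (@eq R a b) end. ring. }
  assert (HPle : forall t, P t <= / 9).
  { intro t. exact (P_le _ _ _ _ _ (HN1 t) (HN2 t) (HN3 t) (HC t)). }
  set (c := 3 / (4 * eps)).
  assert (Hc : 0 < c) by (unfold c; apply Rdiv_lt_0_compat; lra).
  set (F := fun t => Sp t + c * (N1 t * N1 t)).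
  assert (dF : forall t, is_derive F t (E t + c * (2 * (q t - 4 * Sp t) * (N1 t * N1 t)))).
  { intro t. destruct (H t) as (d1&_).
    eapply d_eq. apply d_plus. apply dSp. apply is_derive_scal. apply d_mult; exact d1.
    unfold q. match goal with |- ?a = ?b => change (@eq R a b) end. ring. }
  set (G := fun t => 9 * t - Sp t).
  assert (dG : forall t, is_derive G t (9 - E t)).
  { intro t.
    assert (d9 : is_derive (fun t => 9 * t) t 9).
    { apply (d_eq _ _ (9 * 1)). apply is_derive_scal. apply d_id. match goal with |- ?a = ?b => change (@eq R a b) end. ring. }
    apply (d_eq _ _ (9 + - E t)). apply (d_plus (fun t => 9 * t) (fun t => - Sp t)).
    exact d9. apply d_opp. apply dSp. match goal with |- ?a = ?b => change (@eq R a b) end. ring. }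
  assert (HE9 : forall t, E t <= 9).
  { intro t. exact (E_le9 _ _ _ _ _ (HN1 t) (HN2 t) (HN3 t) (HC t)). }
  assert (HE3 : forall t, / 2 <= Sp t -> E t <= 3 * (N1 t * N1 t)).
  { intros t Ht. replace (N1 t * N1 t) with (N1 t ^ 2) by ring.
    exact (E_le3 _ _ _ _ _ (HN1 t) (HN2 t) (HN3 t) (HC t) Ht). }
  assert (Vmono : forall a b, a <= b -> V a <= V b).
  { intros a b Hab. apply (mono V (fun t => 3 * q t * V t)); auto.
    intros t _. specialize (HVpos t). assert (0 <= q t) by (specialize (Hqs t); nra). nra. }
  set (h := eps / 18).
  assert (Hh : 0 < h) by (unfold h; lra).
  assert (Hwin : forall tau, / 2 + eps < Sp tau -> (1 + 3/2 * h) * V (tau - h) <= V tau).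
  { intros tau Htau.
    assert (Hs : forall s, tau - h <= s <= tau -> / 2 <= Sp s).
    { intros s Hs. assert (G s <= G tau).
      { apply (mono G (fun t => 9 - E t)); auto. lra. intros t _. specialize (HE9 t). lra. }
      unfold G in H0. unfold h in Hs. lra. }
    assert (Hg := growth V (fun t => 3 * q t * V t) (3/2) (tau - h) tau dV).
    replace (tau - (tau - h)) with h in Hg by ring.
    assert (V (tau - h) * exp (3 / 2 * h) <= V tau).
    { apply Hg. lra. intros t Ht. specialize (Hs t Ht). specialize (Hqs t). specialize (HVpos t).
      assert (1/2 <= q t) by nra. nra. }
    assert (1 + 3/2 * h <= exp (3/2 * h)) by apply exp_ineq1_le.
    specialize (HVpos (tau - h)). nra. }
  set (k := 3/2 * h).
  assert (Hk : 0 < k) by (unfold k; lra).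
  assert (Hiter : forall n : nat, exists tau, 0 <= tau /\ V 0 * (1 + INR n * k) <= V tau).
  { induction n as [|n IH].
    - exists 0. split. lra. simpl. lra.
    - destruct IH as [tn [Htn Hvn]].
      destruct (Hvis (tn + h)) as [tau [Ht1 Ht2]].
      exists tau. split. lra.
      assert (Hw := Hwin tau Ht2).
      assert (V tn <= V (tau - h)) by (apply Vmono; lra).
      assert (V 0 <= V tn) by (apply Vmono; lra).
      rewrite S_INR. fold k in Hw.
      assert (0 < V tn) by apply HVpos.
      nra. }
  destruct (INR_unbounded (/ (5 * eps) / (k * V 0))) as [n Hn0].
  destruct (Hiter n) as [T0 [HT0 HVT0]].
  assert (HV0 := HVpos 0).
  assert (HVstar : / (5 * eps) <= V T0).
  { assert (/ (5 * eps) < INR n * (k * V 0)).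
    { apply (Rmult_lt_compat_r (k * V 0)) in Hn0; [|nra].
      unfold Rdiv in Hn0. rewrite Rmult_assoc, Rinv_l in Hn0 by nra. lra. }
    nra. }
  assert (Hsmall : forall t, T0 <= t -> c * (N1 t * N1 t) <= 25/108 * eps).
  { intros t Ht.
    assert (HVt : / (5 * eps) <= V t) by (assert (V T0 <= V t) by (apply Vmono; auto); lra).
    assert (HPt : P t = (- N1 t) * V t) by (unfold P, V; ring).
    assert (Ha : 0 < - N1 t) by (specialize (HN1 t); lra).
    assert ((- N1 t) * / (5 * eps) <= / 9).
    { specialize (HPle t). rewrite HPt in HPle.
      assert ((- N1 t) * / (5 * eps) <= (- N1 t) * V t) by (apply Rmult_le_compat_l; lra). lra. }
    assert (Ha2 : - N1 t <= 5 * eps / 9).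
    { apply (Rmult_le_compat_r (5 * eps)) in H0; [|lra].
      rewrite Rmult_assoc, Rinv_l in H0 by lra. lra. }
    assert (N1 t * N1 t <= 25 / 81 * (eps * eps)).
    { replace (N1 t * N1 t) with ((- N1 t) * (- N1 t)) by ring.
      replace (25 / 81 * (eps * eps)) with ((5 * eps / 9) * (5 * eps / 9)) by field.
      apply Rmult_le_compat; lra. }
    apply Rle_trans with (c * (25 / 81 * (eps * eps))).
    apply Rmult_le_compat_l; lra.
    unfold c. right. field. lra. }
  assert (Hstep : exists t0, T0 <= t0 /\ Sp t0 <= / 2 + eps / 4).
  { apply NNPP. intro C.
    assert (Hall : forall t, T0 <= t -> / 2 + eps / 4 < Sp t).
    { intros t Ht. apply Rnot_le_lt. intro Hl. apply C. exists t. auto. }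
    set (L := / (9 * P T0 * eps)).
    assert (HPT := HPpos T0).
    assert (HL : 0 < L) by (unfold L; apply Rinv_0_lt_compat; nra).
    assert (Hg := growth P (fun t => (4 * q t - 4 * Sp t) * P t) eps T0 (T0 + L) dP).
    replace (T0 + L - T0) with L in Hg by ring.
    assert (P T0 * exp (eps * L) <= P (T0 + L)).
    { apply Hg. lra. intros t Ht. specialize (Hall t ltac:(lra)). specialize (Hqs t).
      specialize (HPpos t).
      assert (eps <= 4 * q t - 4 * Sp t) by nra. nra. }
    assert (1 + eps * L <= exp (eps * L)) by apply exp_ineq1_le.
    assert (P T0 * (eps * L) = / 9) by (unfold L; field; lra).
    specialize (HPle (T0 + L)). nra. }
  destruct Hstep as [t0 [Ht0 Hst0]].
  assert (Hinv := invariance F _ (/ 2 + eps) t0 dF).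
  assert (Hfin : forall t1, t0 <= t1 -> F t1 <= / 2 + eps).
  { apply Hinv.
    - intros t Ht HFt.
      assert (Hs := Hsmall t ltac:(lra)).
      unfold F in HFt.
      assert (HSp : / 2 + eps / 2 <= Sp t) by lra.
      assert (Hn2 : 0 <= N1 t * N1 t) by nra.
      specialize (HE3 t ltac:(lra)). specialize (Hq2 t).
      assert (c * (2 * (q t - 4 * Sp t) * (N1 t * N1 t)) <= c * (2 * (- 2 * eps) * (N1 t * N1 t))).
      { apply Rmult_le_compat_l. lra. nra. }
      assert (c * eps = 3 / 4) by (unfold c; field; lra).
      nra.
    - unfold F. specialize (Hsmall t0 Ht0). lra. }
  destruct (Hvis t0) as [tau [Ht1 Ht2]].
  specialize (Hfin tau Ht1). unfold F in Hfin.
  assert (0 <= c * (N1 tau * N1 tau)) by (apply Rmult_le_pos; nra).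
  lra.
Qed.
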